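(* Let $\alpha\ge0$ and $n\ge2$ with $n\ge\alpha$, and let $K$ be the event that $\mathscr{G}(n,\alpha/n)$ is connected. Then \[ P_{n,\alpha}(K)\le\Bigl(1-\bigl(1-\tfrac{\alpha}{n}\bigr)^{n-1}\Bigr)^{n-1}. \]
   Context: $\mathscr{G}(n,p)$ is the random graph on vertex set $\{1,\dots,n\}$ in which each of the $\binom n2$ unordered pairs is an edge independently with probability $p$; here $p=\alpha/n$, and $P_{n,\alpha}$ is the corresponding probability measure. *)

(* Defs.v *)
From mathcomp Require Import all_boot all_order all_algebra.
From mathcomp Require Import reals.
Set Implicit Arguments. Unset Strict Implicit. Unset Printing Implicit Defensive.
Import Order.TTheory GRing.Theory Num.Theory.
Local Open Scope ring_scope.

(* Unordered pairs {i,j}, i <> j, of vertices of {0,...,n-1}, encoded as (i,j) with i < j. *)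
Definition vpair (n : nat) := {ij : 'I_n * 'I_n | (ij.1 < ij.2)%N}.

Definition graph (n : nat) := {ffun vpair n -> bool}.

Definition adj (n : nat) (g : graph n) : rel 'I_n :=
  fun i j => [exists e : vpair n, g e && ((val e == (i, j)) || (val e == (j, i)))].

Definition connectedb (n : nat) (g : graph n) : bool :=
  [forall i : 'I_n, forall j : 'I_n, connect (adj g) i j].

Definition gnp_weight (R : realType) (n : nat) (p : R) (g : graph n) : R :=
  \prod_(e : vpair n) (if g e then p else 1 - p).

Definition gnp_prob (R : realType) (n : nat) (p : R) (E : pred (graph n)) : R :=
  \sum_(g : graph n | E g) gnp_weight p g.

(* Main.v *)
Require Import Defs.
From mathcomp Require Import all_boot all_order all_algebra.
From mathcomp Require Import reals.
From mathcomp Require Import ring lra.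
Set Implicit Arguments. Unset Strict Implicit. Unset Printing Implicit Defensive.
Import Order.TTheory GRing.Theory Num.Theory.
Local Open Scope ring_scope.

Section Gen.
Variable R : realFieldType.
Variable p : R.
Definition wb (b : bool) : R := if b then p else 1 - p.
Definition wt (I : finType) (z : {ffun I -> bool}) : R := \prod_i wb (z i).
Definition upd (I : finType) (z : {ffun I -> bool}) (c : I) (b : bool) : {ffun I -> bool} :=
  [ffun i => if i == c then b else z i].

Lemma upd_same (I : finType) (z : {ffun I -> bool}) c : upd z c (z c) = z.
Proof. by apply/ffunP=> i; rewrite ffunE; case: eqP => // ->. Qed.

Lemma upd_upd (I : finType) (z : {ffun I -> bool}) c b b' : upd (upd z c b') c b = upd z c b.
Proof. by apply/ffunP=> i; rewrite !ffunE; case: eqP. Qed.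

Lemma upd_c (I : finType) (z : {ffun I -> bool}) c b : upd z c b c = b.
Proof. by rewrite ffunE eqxx. Qed.

Lemma wt_split (I : finType) (z : {ffun I -> bool}) c :
  wt z = wb (z c) * \prod_(i | i != c) wb (z i).
Proof. by rewrite /wt (bigD1 c). Qed.

Lemma rest_upd (I : finType) (z : {ffun I -> bool}) c b :
  \prod_(i | i != c) wb (upd z c b i) = \prod_(i | i != c) wb (z i).
Proof. by apply: eq_bigr => i /negbTE H; rewrite ffunE H. Qed.

Lemma sum_flip (I : finType) c (H : {ffun I -> bool} -> R) :
  \sum_(z : {ffun I -> bool}) H z = \sum_(z : {ffun I -> bool} | z c) (H z + H (upd z c (~~ z c))).
Proof.
rewrite big_split /= [LHS](bigID (fun z : {ffun I -> bool} => z c)) /=; congr (_ + _).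
have inj : injective (fun z : {ffun I -> bool} => upd z c (~~ z c)).
  apply: (can_inj (g := fun z : {ffun I -> bool} => upd z c (~~ z c))) => z.
  by rewrite upd_upd upd_c negbK upd_same.
rewrite (reindex_inj inj) /=; apply: eq_bigl => z; by rewrite upd_c negbK.
Qed.

Lemma one_coord (I : finType) c (G : {ffun I -> bool} -> R) :
  \sum_(z : {ffun I -> bool}) wt z * G z = \sum_z wt z * (p * G (upd z c true) + (1 - p) * G (upd z c false)).
Proof.
rewrite (sum_flip c) [RHS](sum_flip c); apply: eq_bigr => z zc.
have E : upd z c true = z by rewrite -[RHS](upd_same z c) zc.
rewrite zc /= !upd_upd E (wt_split z c) (wt_split (upd z c false) c) !rest_upd upd_c zc /wb; ring.
Qed.

Lemma lin (I : finType) a b (X Y : {ffun I -> bool} -> R) :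
  \sum_(z : {ffun I -> bool}) wt z * (a * X z + b * Y z) = a * (\sum_z wt z * X z) + b * (\sum_z wt z * Y z).
Proof. rewrite !mulr_sumr -big_split /=; apply: eq_bigr => z _; ring. Qed.

Lemma two_coord (I : finType) c1 c2 (G : {ffun I -> bool} -> R) :
  \sum_(z : {ffun I -> bool}) wt z * G z = \sum_z wt z * (p * (p * G (upd (upd z c2 true) c1 true) + (1 - p) * G (upd (upd z c2 false) c1 true))
     + (1 - p) * (p * G (upd (upd z c2 true) c1 false) + (1 - p) * G (upd (upd z c2 false) c1 false))).
Proof.
rewrite [LHS](one_coord c1) [LHS]lin.
rewrite (one_coord c2 (fun z => G (upd z c1 true))) (one_coord c2 (fun z => G (upd z c1 false))).
by rewrite [RHS]lin !lin.
Qed.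

Lemma sum_wt (I : finType) : \sum_(z : {ffun I -> bool}) wt z = 1.
Proof.
rewrite /wt -(bigA_distr_bigA (fun (i : I) (b : bool) => wb b)) /=.
by apply: big1 => i _; rewrite big_bool /wb /=; ring.
Qed.

Lemma wt_ge0 (I : finType) (z : {ffun I -> bool}) : 0 <= p -> p <= 1 -> 0 <= wt z.
Proof. move=> p0 p1; apply: prodr_ge0 => i _; rewrite /wb; case: (z i); lra. Qed.

Lemma num_ineq (A' A B C D D' : bool) : 0 <= p -> p <= 1 ->
  (A' -> A) -> (A -> B) -> (A -> C) -> (B -> D) -> (C -> D) -> (D' -> B || C) ->
  p * (p * D'%:R + (1 - p) * D'%:R) + (1 - p) * (p * A'%:R + (1 - p) * A'%:R) <=
  p * (p * D%:R + (1 - p) * B%:R) + (1 - p) * (p * C%:R + (1 - p) * A%:R).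
Proof.
move=> p0 p1; case: A'; case: A; case: B; case: C; case: D; case: D' => //= h1 h2 h3 h4 h5 h6;
  try (have := h1 isT); try (have := h2 isT); try (have := h3 isT); try (have := h4 isT);
  try (have := h5 isT); try (have := h6 isT) => //; nra.
Qed.
Lemma num_ineq' (A1 A2 A B C D D1 D2 : bool) : 0 <= p -> p <= 1 -> D1 = D2 -> A1 = A2 ->
  (A2 -> A) -> (A -> B) -> (A -> C) -> (B -> D) -> (C -> D) -> (D1 -> B || C) ->
  p * (p * D1%:R + (1 - p) * D2%:R) + (1 - p) * (p * A1%:R + (1 - p) * A2%:R) <=
  p * (p * D%:R + (1 - p) * B%:R) + (1 - p) * (p * C%:R + (1 - p) * A%:R).
Proof. move=> p0 p1 -> ->; exact: num_ineq. Qed.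
End Gen.
Section Model.
Variable R : realFieldType.
Variable p : R.
Variable n : nat.
Variable r : 'I_n.
Notation C := ('I_n * 'I_n)%type.

Definition yS (S : {set C}) (z : {ffun C -> bool}) (c : C) : bool :=
  if (c.2, c.1) \in S then z (c.2, c.1) else z c.

Definition WS (S : {set C}) (y : C -> bool) : bool :=
  [exists f : {ffun 'I_n -> 'I_n}, [forall v, (v != r) ==>
     [&& f v != v, y (v, f v) & ~~ ((f (f v) == v) && (((f v, v) \in S) || ((v, f v) \in S)))]]].

Lemma WSP (S : {set C}) (y : C -> bool) : reflect (exists f : {ffun 'I_n -> 'I_n}, forall v, v != r ->
     [/\ f v != v, y (v, f v) & ~~ ((f (f v) == v) && (((f v, v) \in S) || ((v, f v) \in S)))]) (WS S y).
Proof.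
apply: (iffP existsP) => -[f Hf]; exists f.
  by move=> v vr; move/forallP/(_ v): Hf; rewrite vr /= => /and3P.
by apply/forallP => v; apply/implyP => vr; apply/and3P; apply: Hf.
Qed.

Lemma WS_le (S1 S2 : {set C}) (y1 y2 : C -> bool) : S2 \subset S1 -> (forall c, y1 c -> y2 c) -> WS S1 y1 -> WS S2 y2.
Proof.
move=> sub hy /WSP [f Hf]; apply/WSP; exists f => v vr; have [h1 h2 h3] := Hf v vr.
split => //; first exact: hy.
apply: contra h3 => /andP [-> /=] /orP [] h; apply/orP; [left|right]; exact: (subsetP sub).
Qed.

Definition U : {set C} := [set c : C | (c.1 < c.2)%N].

Definition GS S (z : {ffun C -> bool}) : R := (WS S (yS S z))%:R.

Section Step.
Variables (S : {set C}) (a b : 'I_n).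
Hypotheses (SU : S \subset U) (ab : (a < b)%N) (eS : (a, b) \notin S).
Let S' := (a, b) |: S.
Let zz (z : {ffun C -> bool}) x y := upd (upd z (b, a) y) (a, b) x.

Lemma ba_notU : (b, a) \notin U.
Proof. by rewrite inE /= -leqNgt ltnW. Qed.

Lemma ba_S : (b, a) \notin S.
Proof. by apply: contra ba_notU; apply: (subsetP SU). Qed.

Lemma ba_S' : (b, a) \notin S'.
Proof.
rewrite /S' !inE negb_or ba_S andbT; apply/eqP => -[h _].
by move: ab; rewrite h ltnn.
Qed.

Lemma neq_ab_ba : (a, b) != (b, a).
Proof. by apply/eqP => -[h _]; move: ab; rewrite h ltnn. Qed.

Lemma zz_ab z x y : zz z x y (a, b) = x.
Proof. by rewrite /zz upd_c. Qed.
Lemma zz_ba z x y : zz z x y (b, a) = y.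
Proof. by rewrite /zz ffunE eq_sym (negbTE (neq_ab_ba)) upd_c. Qed.

Lemma zz_other z x y d : d != (a, b) -> d != (b, a) -> zz z x y d = z d.
Proof. by move=> h1 h2; rewrite /zz !ffunE (negbTE h1) (negbTE h2). Qed.

Lemma swap_neq (c : C) (u w : 'I_n) : c != (u, w) -> (c.2, c.1) != (w, u).
Proof. by case: c => c1 c2 /=; rewrite !xpair_eqE andbC. Qed.

Lemma K1 z x y (c : C) : c != (a, b) -> c != (b, a) -> yS S (zz z x y) c = yS S z c.
Proof.
move=> h1 h2; rewrite /yS; case: ifP => _; rewrite zz_other //; exact: swap_neq.
Qed.

Lemma K2 z x y (c : C) : c != (a, b) -> c != (b, a) -> yS S' (zz z x y) c = yS S z c.
Proof.
move=> h1 h2; rewrite -(K1 z x y h1 h2) /yS /S' in_setU1 (negbTE (swap_neq h2)) /=.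
by [].
Qed.

Lemma V1 z x y : yS S (zz z x y) (a, b) = x.
Proof. by rewrite /yS /= (negbTE ba_S) zz_ab. Qed.
Lemma V2 z x y : yS S (zz z x y) (b, a) = y.
Proof. by rewrite /yS /= (negbTE eS) zz_ba. Qed.
Lemma V3 z x y : yS S' (zz z x y) (a, b) = x.
Proof. by rewrite /yS /= (negbTE ba_S') zz_ab. Qed.
Lemma V4 z x y : yS S' (zz z x y) (b, a) = x.
Proof. by rewrite /yS /= /S' setU11 zz_ab. Qed.


Lemma ptw (P : C -> Prop) : P (a, b) -> P (b, a) ->
  (forall c, c != (a, b) -> c != (b, a) -> P c) -> forall c, P c.
Proof. by move=> h1 h2 h3 c; case: (eqVneq c (a, b)) => [->//|]; case: (eqVneq c (b, a)) => [->//|]; auto. Qed.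

Lemma sub_SS' : S \subset S'.
Proof. exact: subsetUr. Qed.

Lemma F_le (S1 S2 : {set C}) z1 z2 : S2 \subset S1 ->
  (forall c, yS S1 z1 c -> yS S2 z2 c) -> WS S1 (yS S1 z1) -> WS S2 (yS S2 z2).
Proof. move=> h1 h2; exact: WS_le. Qed.

Lemma F1 z : WS S' (yS S' (zz z false false)) -> WS S (yS S (zz z false false)).
Proof.
apply: (@F_le S' S (zz z false false) (zz z false false) sub_SS').
apply: (@ptw (fun c => yS S' (zz z false false) c -> yS S (zz z false false) c)).
- by rewrite V3.
- by rewrite V4.
- by move=> c h1 h2; rewrite K1 // K2.
Qed.

Lemma F2 z x y x' y' : (x ==> x') -> (y ==> y') ->
  WS S (yS S (zz z x y)) -> WS S (yS S (zz z x' y')).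
Proof.
move=> hx hy; apply: (@F_le S S (zz z x y) (zz z x' y') (subxx S)).
apply: (@ptw (fun c => yS S (zz z x y) c -> yS S (zz z x' y') c)).
- by rewrite !V1; apply/implyP.
- by rewrite !V2; apply/implyP.
- by move=> c h1 h2; rewrite !K1.
Qed.

Lemma F3 z x : WS S' (yS S' (zz z x true)) = WS S' (yS S' (zz z x false)).
Proof.
apply/idP/idP.
  apply: (@F_le S' S' (zz z x true) (zz z x false) (subxx S')).
  apply: (@ptw (fun c => yS S' (zz z x true) c -> yS S' (zz z x false) c)).
  - by rewrite !V3.
  - by rewrite !V4.
  - by move=> c h1 h2; rewrite !K2.
apply: (@F_le S' S' (zz z x false) (zz z x true) (subxx S')).
apply: (@ptw (fun c => yS S' (zz z x false) c -> yS S' (zz z x true) c)).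
- by rewrite !V3.
- by rewrite !V4.
- by move=> c h1 h2; rewrite !K2.
Qed.

Lemma F6 z : WS S' (yS S' (zz z true true)) ->
  WS S (yS S (zz z true false)) || WS S (yS S (zz z false true)).
Proof.
move/WSP => [f Hf].
have Sab : (a, b) \in S' by rewrite /S' setU11.
case h: ((a != r) && (f a == b)).
- apply/orP; left; apply/WSP; exists f => v vr; have [h1 h2 h3] := Hf v vr.
  split; first exact: h1.
  + have nba : (v, f v) != (b, a).
      apply/eqP => -[ev efv]; move: h => /andP [ar /eqP fa].
      have [_ _ h3'] := Hf a ar; move: h3'; rewrite fa -{1}ev efv eqxx /= Sab orbT //.
    case: (eqVneq (v, f v) (a, b)) => [->|nab]; first by rewrite V1.
    by rewrite K1 // -(K2 z true true nab nba).
  + apply: contra h3 => /andP [-> /=] /orP [] hh; apply/orP; [left|right];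
      exact: (subsetP sub_SS').
- apply/orP; right; apply/WSP; exists f => v vr; have [h1 h2 h3] := Hf v vr.
  split; first exact: h1.
  + have nab : (v, f v) != (a, b).
      apply/eqP => -[ev efv]; move: h; rewrite -ev vr efv eqxx //.
    case: (eqVneq (v, f v) (b, a)) => [->|nba]; first by rewrite V2.
    by rewrite K1 // -(K2 z true true nab nba).
  + apply: contra h3 => /andP [-> /=] /orP [] hh; apply/orP; [left|right];
      exact: (subsetP sub_SS').
Qed.
Lemma step : 0 <= p -> p <= 1 ->
  \sum_(z : {ffun C -> bool}) wt p z * GS S' z <= \sum_(z : {ffun C -> bool}) wt p z * GS S z.
Proof.
move=> p0 p1.
rewrite (two_coord p (a, b) (b, a) (GS S')) (two_coord p (a, b) (b, a) (GS S)).
apply: ler_sum => z _; apply: ler_wpM2l; first exact: wt_ge0.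
exact: (num_ineq' p0 p1 (@F3 z true) (@F3 z false) (@F1 z)
  (@F2 z false false true false isT isT) (@F2 z false false false true isT isT)
  (@F2 z true false true true isT isT) (@F2 z false true true true isT isT) (@F6 z)).
Qed.
End Step.
End Model.
Lemma prod_nat_forall (R : realFieldType) (I : finType) (P : pred I) :
  \prod_i ((P i)%:R : R) = ([forall i, P i])%:R.
Proof.
case: (boolP [forall i, P i]) => h.
  by apply: big1 => i _; move/forallP: h => ->.
move: h; rewrite negb_forall => /existsP [i Pi].
by rewrite (bigD1 i) //= (negbTE Pi) mul0r.
Qed.

Section Marg.
Variable R : realType.
Variable p : R.
Variable n : nat.
Notation C := ('I_n * 'I_n)%type.

Definition gz (z : {ffun C -> bool}) : graph n := [ffun e : vpair n => z (val e)].

Lemma gz_eq (z : {ffun C -> bool}) (g : graph n) :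
  (gz z == g) = [forall e, z (val e) == g e].
Proof.
apply/eqP/forallP => [<- e|H]; first by rewrite ffunE.
by apply/ffunP => e; rewrite ffunE; apply/eqP.
Qed.

Lemma prod_insub (F : C -> vpair n -> R) :
  \prod_(c : C) oapp (F c) 1 (insub c) = \prod_(e : vpair n) F (val e) e.
Proof.
rewrite (bigID (fun c : C => (c.1 < c.2)%N)) /= [X in _ * X]big1 ?mulr1; last first.
  by move=> c /negbTE h; rewrite insubF.
rewrite (reindex_omap (val : vpair n -> C) insub); last by move=> c h; rewrite insubT.
apply: eq_big => [e|e _]; first by rewrite (valP e) valK eqxx.
by rewrite valK.
Qed.

Lemma marg_w (g : graph n) :
  \sum_(z : {ffun C -> bool}) wt p z * (gz z == g)%:R = gnp_weight p g.
Proof.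
pose h (c : C) (b : bool) : R := wb p b * oapp (fun e => (b == g e)%:R) 1 (insub c).
have E1 : forall z : {ffun C -> bool}, wt p z * (gz z == g)%:R = \prod_c h c (z c).
  move=> z; rewrite /h big_split /=; congr (_ * _).
  by rewrite (prod_insub (fun c e => ((z c == g e)%:R : R))) prod_nat_forall gz_eq.
rewrite (eq_bigr _ (fun z _ => E1 z)) -(bigA_distr_bigA h) /=.
rewrite /gnp_weight -(prod_insub (fun c e => if g e then p else 1 - p)).
apply: eq_bigr => c _; rewrite big_bool /h /wb.
case: (insub c) => [e|] /=; last by rewrite !mulr1 addrC subrK.
by case: (g e) => /=; rewrite ?mulr1 ?mulr0 ?addr0 ?add0r.
Qed.

Lemma marg (F : graph n -> R) :
  \sum_(z : {ffun C -> bool}) wt p z * F (gz z) = \sum_g gnp_weight p g * F g.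
Proof.
have E : forall z : {ffun C -> bool}, F (gz z) = \sum_g (gz z == g)%:R * F g.
  move=> z; rewrite (bigD1 (gz z)) //= eqxx mul1r big1 ?addr0 // => g /negbTE.
  by rewrite eq_sym => ->; rewrite mul0r.
under eq_bigr => z _ do rewrite E mulr_sumr.
rewrite exchange_big /=; apply: eq_bigr => g _.
by rewrite -marg_w mulr_suml; apply: eq_bigr => z _; rewrite mulrA.
Qed.
End Marg.
Section Ind.
Variable R : realFieldType.
Variable p : R.
Variable n : nat.
Variable r : 'I_n.
Notation C := ('I_n * 'I_n)%type.
Definition EG (S : {set C}) := \sum_(z : {ffun C -> bool}) wt p z * GS R r S z.

Lemma ind_le (S : {set C}) : 0 <= p -> p <= 1 -> S \subset U n -> EG S <= EG set0.
Proof.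
move=> p0 p1; move: {2}#|S| (erefl #|S|) => k; elim: k S => [|k IH] S hk SU.
  by move/eqP: hk; rewrite cards_eq0 => /eqP ->.
have : (0 < #|S|)%N by rewrite hk.
rewrite card_gt0 => /set0Pn [[a b] eS].
have ab : (a < b)%N by move: (subsetP SU _ eS); rewrite inE.
have S0U : S :\ (a, b) \subset U n by apply: subset_trans SU; apply: subsetDl.
have nS0 : (a, b) \notin S :\ (a, b) by rewrite setD11.
apply: le_trans (IH (S :\ (a, b)) _ S0U); last by apply/eqP; rewrite -(eqn_add2l 1) !add1n -hk (cardsD1 (a, b) S) eS.
have := step r S0U ab nS0 p0 p1.
by rewrite setD1K.
Qed.
End Ind.
Lemma pc (R : realFieldType) n (v : 'I_n) (q : R) : \prod_(i | i != v) q = q ^+ n.-1.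
Proof. by rewrite prodr_const cardC1 card_ord. Qed.
Lemma pc2 (R : realFieldType) n (v : 'I_n) (q : R) : \prod_i (if i == v then 1 else q) = q ^+ n.-1.
Proof. rewrite (bigD1 v) //= eqxx mul1r -(@pc R n v q); apply: eq_bigr => i /negbTE ->. by []. Qed.

Section Zero.
Variable R : realFieldType.
Variable p : R.
Variable n : nat.
Variable r : 'I_n.
Notation C := ('I_n * 'I_n)%type.

Definition unc (Z : {ffun 'I_n -> {ffun 'I_n -> bool}}) : {ffun C -> bool} := [ffun c => Z c.1 c.2].
Definition cur (z : {ffun C -> bool}) : {ffun 'I_n -> {ffun 'I_n -> bool}} := [ffun v => [ffun w => z (v, w)]].

Lemma uncK : cancel cur unc.
Proof. by move=> z; apply/ffunP => -[v w]; rewrite !ffunE. Qed.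
Lemma curK : cancel unc cur.
Proof. by move=> Z; apply/ffunP => v; apply/ffunP => w; rewrite !ffunE. Qed.

Lemma sum_cur (F : {ffun C -> bool} -> R) :
  \sum_(z : {ffun C -> bool}) F z = \sum_(Z : {ffun 'I_n -> {ffun 'I_n -> bool}}) F (unc Z).
Proof.
rewrite (reindex unc) //; exists cur => x _; [exact: curK | exact: uncK].
Qed.

Definition rowF (v : 'I_n) (row : {ffun 'I_n -> bool}) : R :=
  wt p row * ((v != r) ==> [exists w, (w != v) && row w])%:R.

Lemma row_sum v : 0 <= p ->
  \sum_row rowF v row = if v == r then 1 else 1 - (1 - p) ^+ n.-1.
Proof.
move=> _; rewrite /rowF; case: eqP => [->|/eqP vr] /=.
  by under eq_bigr do rewrite mulr1; rewrite sum_wt.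
have E : forall row : {ffun 'I_n -> bool},
   wt p row * ([exists w, (w != v) && row w])%:R =
   wt p row - \prod_w (wb p (row w) * ((w != v) ==> ~~ row w)%:R).
  move=> row; rewrite big_split /= prod_nat_forall.
  have -> : [forall w, (w != v) ==> ~~ row w] = ~~ [exists w, (w != v) && row w].
    by rewrite negb_exists; apply: eq_forallb => w; rewrite negb_and implybE.
  by case: [exists w, _]; rewrite /= ?mulr1 ?mulr0 ?subr0 ?subrr.
under eq_bigr do rewrite E.
rewrite sumrB sum_wt; congr (_ - _).
rewrite -(bigA_distr_bigA (fun w b => wb p b * ((w != v) ==> ~~ b)%:R)) /=.
rewrite -(pc2 v (1 - p)); apply: eq_bigr => w _.
rewrite big_bool /wb /=; case: (eqVneq w v) => [e|wv] /=.
  by rewrite !mulr1 addrC subrK.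
by rewrite mulr0 mulr1 add0r.
Qed.

Lemma EG0 : 0 <= p ->
  \sum_(z : {ffun C -> bool}) wt p z * GS R r set0 z = (1 - (1 - p) ^+ n.-1) ^+ n.-1.
Proof.
move=> p0.
have E : forall Z, wt p (unc Z) * GS R r set0 (unc Z) = \prod_v rowF v (Z v).
  move=> Z; rewrite /rowF big_split /=; congr (_ * _).
    rewrite /wt (pair_bigA _ (fun v w => wb p (Z v w))).
    by apply: eq_bigr => c _; rewrite ffunE.
  rewrite /GS prod_nat_forall; congr (_%:R); congr (nat_of_bool _).
  apply/WSP/forallP => [[f Hf] v|H].
    apply/implyP => vr; have [h1 h2 _] := Hf v vr.
    apply/existsP; exists (f v); rewrite h1 /=.
    by move: h2; rewrite /yS inE ffunE.
  pose f := [ffun v => if [pick w | (w != v) && Z v w] is Some w then w else v].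
  exists f => v vr; move/implyP: (H v) => /(_ vr) /existsP => ex.
  rewrite /f ffunE; case: pickP => [w /andP [wv zw]|/(_ _) hn]; last first.
    by case: ex => w; rewrite hn.
  split; first exact: wv.
    by rewrite /yS inE ffunE.
  by rewrite !in_set0 andbF.
rewrite sum_cur; under eq_bigr do rewrite E.
rewrite -(bigA_distr_bigA rowF) /=.
under eq_bigr do rewrite row_sum //.
exact: pc2.
Qed.
End Zero.
Section Conn.
Variable n : nat.
Variable r : 'I_n.
Notation C := ('I_n * 'I_n)%type.
Variable z : {ffun C -> bool}.
Let g := gz z.
Hypothesis Hc : connectedb g.

Definition Pd v k := [exists t : k.-tuple 'I_n, path (adj g) v t && (last v t == r)].

Lemma PdP v k : reflect (exists s : seq 'I_n, [/\ size s = k, path (adj g) v s & last v s = r]) (Pd v k).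
Proof.
apply: (iffP existsP) => [[t /andP [h1 /eqP h2]]|[s [hs h1 h2]]].
  by exists t; split => //; rewrite size_tuple.
have hs' : size s == k by rewrite hs.
by exists (@Tuple k 'I_n s hs'); rewrite /= h1 h2 eqxx.
Qed.

Lemma exPd v : exists k, Pd v k.
Proof.
move/forallP: Hc => /(_ v) /forallP /(_ r) /connectP [s h1 h2].
by exists (size s); apply/PdP; exists s.
Qed.

Definition dd v := ex_minn (exPd v).

Lemma dd_r : dd r = 0%N.
Proof.
rewrite /dd; case: ex_minnP => m _ hm; apply/eqP; rewrite -leqn0; apply: hm.
by apply/PdP; exists [::].
Qed.

Lemma dd_step v : v != r -> exists w, adj g v w && (dd w < dd v)%N.
Proof.
move=> vr; rewrite /dd; case: ex_minnP => m /PdP [s [hs h1 h2]] hm.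
case: s hs h1 h2 => [|w s] hs h1 h2.
  by move: vr; rewrite -h2 /= eqxx.
move: h1 => /= /andP [avw pw].
exists w; rewrite avw /=; case: ex_minnP => m' _ hm'.
have : (m' <= size s)%N by apply: hm'; apply/PdP; exists s.
by rewrite -hs /=.
Qed.

Definition ff : {ffun 'I_n -> 'I_n} :=
  [ffun v => if [pick w | adj g v w && (dd w < dd v)%N] is Some w then w else v].

Lemma ff_r : ff r = r.
Proof.
rewrite /ff ffunE; case: pickP => [w /andP [_]|//].
by rewrite dd_r ltn0.
Qed.

Lemma ff_step v : v != r -> adj g v (ff v) && (dd (ff v) < dd v)%N.
Proof.
move=> vr; rewrite /ff ffunE; case: pickP => [w //|hn].
by have [w hw] := dd_step vr; move: (hn w); rewrite hw.
Qed.

Lemma adj_yS v w : adj g v w -> yS (U n) z (v, w).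
Proof.
move/existsP => [[[a b] lt] /andP [ge he]]; move: ge; rewrite /g ffunE /= /yS inE /=.
move: lt he => /= lt /orP [] /eqP [<- <-].
  by rewrite ltnNge (ltnW lt).
by rewrite lt.
Qed.

Lemma conn_WS : WS r (U n) (yS (U n) z).
Proof.
apply/WSP; exists ff => v vr.
have /andP [a1 a2] := ff_step vr.
have ne : ff v != v by apply/eqP => h; move: a2; rewrite h ltnn.
split => //; first exact: adj_yS.
apply/negP => /andP [/eqP h _].
case: (eqVneq (ff v) r) => [e|nr].
  by move: h; rewrite e ff_r => h; move: vr; rewrite -h eqxx.
have /andP [_ a3] := ff_step nr.
by move: a3; rewrite h => a3; have := ltn_trans a3 a2; rewrite ltnn.
Qed.
End Conn.

Unset Implicit Arguments.
Theorem lemma3p3 (R : realType) (n : nat) (alpha : R) :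
  0 <= alpha -> (2 <= n)%N -> alpha <= n%:R ->
  gnp_prob (alpha / n%:R) (@connectedb n) <=
    (1 - (1 - alpha / n%:R) ^+ (n - 1)) ^+ (n - 1).
Proof.
move=> a0 n2 an.
have n0 : (0 < n)%N by apply: leq_trans n2.
have nR : 0 < n%:R :> R by rewrite ltr0n.
set p := alpha / n%:R.
have p0 : 0 <= p by rewrite /p divr_ge0 // ltW.
have p1 : p <= 1 by rewrite /p ler_pdivrMr // mul1r.
pose r : 'I_n := Ordinal n0.
rewrite subn1 -(EG0 r p0).
apply: le_trans (ind_le r p0 p1 (subxx (U n))).
rewrite /gnp_prob big_mkcond /=.
rewrite (eq_bigr (fun g => gnp_weight p g * (connectedb g)%:R)); last first.
  by move=> g _; case: (connectedb g); rewrite ?mulr1 ?mulr0.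
rewrite -(marg p (fun g => (connectedb g)%:R)) /EG.
apply: ler_sum => z _; apply: ler_wpM2l; first exact: wt_ge0.
rewrite /GS ler_nat; case h: (connectedb (gz z)) => //.
by rewrite (conn_WS r h).
Qed.
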